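(* Let $n\ge1$, $T\ge2$, let $G=([T],\mathcal{E})$ be an undirected graph with incidence matrix $D$ (any edge orientation), Laplacian $L=D^\top D$ with eigenvalues $\lambda_1\ge\cdots\ge\lambda_{T-1}\ge\lambda_T=0$, and $M=D\otimes I_n$. Let $C_t\in\mathbb{R}^{m_t\times n}$ for $t\in[T]$, $C=\mathrm{blockdiag}(C_1,\dots,C_T)$ and $O_T^\top O_T=\sum_{t=1}^T C_t^\top C_t$. Let $b_1,b_2,b_3>0$ satisfy $$\lambda_{T-1}\ge b_1,\qquad \frac{\lambda_{\min}(O_T^\top O_T)}{T}\ge b_2,\qquad 2\|C\|_2\frac{\lambda_{\max}^{1/2}(O_T^\top O_T)}{\sqrt T}\le b_3,$$ and let $\mu>0$. Then $\lambda_{\min}(\mu M^\top M+C^\top C)\ge\overline{\lambda}(\mu):=\max\{\overline{\lambda'}(\mu),\lambda_{\min}(C^\top C)\}$, where $$\overline{\lambda'}(\mu)=\begin{cases}\dfrac{b_2^2}{2(b_2^2+b_3^2)}\mu b_1, & \text{if } \mu b_1<b_2+\dfrac{b_3^2-b_2^2}{2b_2},\\[2mm] \dfrac14\Big(1-\dfrac{\mu b_1-b_2}{\sqrt{b_3^2+(\mu b_1-b_2)^2}}\Big)\mu b_1+\dfrac{b_2}{4}+\dfrac{b_2(\mu b_1-b_2)-b_3^2}{4\sqrt{b_3^2+(\mu b_1-b_2)^2}}, & \text{if } \mu b_1\ge b_2+\dfrac{b_3^2-b_2^2}{2b_2}.\end{cases}$$ In particular, if $\mu b_1\ge b_2+\frac{b_3^2}{b_2}$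 then $\overline{\lambda'}(\mu)\ge\frac{b_2}{4}$.
   Context: $\otimes$ is the Kronecker product; $\lambda_{\min},\lambda_{\max}$ denote smallest/largest eigenvalues of symmetric matrices; $\|\cdot\|_2$ is the spectral norm; $\mathrm{blockdiag}$ denotes the block-diagonal matrix with the given diagonal blocks. *)

(* Defs.v *)
From HB Require Import structures.
From mathcomp Require Import all_boot all_order all_algebra.
From mathcomp Require Import boolp reals.
Set Implicit Arguments. Unset Strict Implicit. Unset Printing Implicit Defensive.
Import Order.TTheory GRing.Theory Num.Theory.
Local Open Scope ring_scope.

Section Defs.
Variable R : realType.

(* For real symmetric matrices such s exists and is unique. *)
Definition is_spectrum (k : nat) (A : 'M[R]_k) (s : seq R) : Prop :=
  sorted (fun x y : R => y <= x) s /\ char_poly A = \prod_(a <- s) ('X - a%:P).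

(* the (nonincreasing) list of eigenvalues with multiplicity; [::] if the
   characteristic polynomial does not split over R (never happens for the
   symmetric matrices used below). *)
Definition spectrum (k : nat) (A : 'M[R]_k) : seq R :=
  match pselect (exists s, is_spectrum A s) with
  | left h => projT1 (cid h)
  | right _ => [::]
  end.

(* i-th largest eigenvalue, 1-indexed: eig A 1 = lambda_1 = lambda_max. *)
Definition eig (k : nat) (A : 'M[R]_k) (i : nat) : R := nth 0 (spectrum A) i.-1.
Definition lambda_max (k : nat) (A : 'M[R]_k) : R := eig A 1.
Definition lambda_min (k : nat) (A : 'M[R]_k) : R := eig A k.

Definition spec_norm (p q : nat) (A : 'M[R]_(p, q)) : R :=
  Num.sqrt (lambda_max (A^T *m A)).

Definition kron (p q r s : nat) (A : 'M[R]_(p, q)) (B : 'M[R]_(r, s))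
  : 'M[R]_(\sum_(i < p) r, \sum_(j < q) s) :=
  \mxblock_(i < p, j < q) (A i j *: B).

Definition blockdiag (T n : nat) (m : 'I_T -> nat) (Cs : forall t, 'M[R]_(m t, n))
  : 'M[R]_(\sum_(i < T) m i, \sum_(j < T) n) :=
  \mxblock_(i < T, j < T) (if i == j then Cs i else 0).

(* D : 'M_(E, T) is an incidence matrix of the simple undirected graph g
   (symmetric irreflexive relation on [T]) for some orientation of its edges:
   rows are in bijection with the edges, and row r is e_{src r} - e_{dst r}. *)
Definition is_incidence (T E : nat) (g : rel 'I_T) (D : 'M[R]_(E, T)) : Prop :=
  exists src dst : 'I_E -> 'I_T,
    (forall r, g (src r) (dst r)) /\
    (forall u v, g u v -> exists! r : 'I_E,
         (src r = u /\ dst r = v) \/ (src r = v /\ dst r = u)) /\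
    (forall r w, D r w = (w == src r)%:R - (w == dst r)%:R).

Definition lambda_bar' (b1 b2 b3 mu : R) : R :=
  let x := mu * b1 - b2 in
  let q := Num.sqrt (b3 ^+ 2 + x ^+ 2) in
  if mu * b1 < b2 + (b3 ^+ 2 - b2 ^+ 2) / (2 * b2)
  then b2 ^+ 2 / (2 * (b2 ^+ 2 + b3 ^+ 2)) * (mu * b1)
  else 4^-1 * (1 - x / q) * (mu * b1) + b2 / 4 + (b2 * x - b3 ^+ 2) / (4 * q).

Definition lambda_bar (k : nat) (b1 b2 b3 mu : R) (CtC : 'M[R]_k) : R :=
  Num.max (lambda_bar' b1 b2 b3 mu) (lambda_min CtC).

End Defs.

(* Main.v *)
Require Import Defs.
From HB Require Import structures.
From mathcomp Require Import all_boot all_order all_algebra.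
From mathcomp Require Import boolp reals.
From mathcomp Require Import complex.
From mathcomp Require Import zify ring lra.
Import Order.TTheory GRing.Theory Num.Theory.
Local Open Scope ring_scope.
Set Implicit Arguments. Unset Strict Implicit. Unset Printing Implicit Defensive.

Section Spec.
Variable R : realType.
Local Notation C := (R[i]).
Local Notation toC := (real_complex R).

Lemma char_poly_conj k (P B : 'M[C]_k) : P \in unitmx ->
  char_poly (invmx P *m B *m P) = char_poly B.
Proof.
move=> Pu; rewrite /char_poly /char_poly_mx.
set Q := map_mx polyC P; set Qi := map_mx polyC (invmx P).
have QiQ : Qi *m Q = 1%:M by rewrite -map_mxM mulVmx // map_mx1.
have -> : 'X%:M - map_mx polyC (invmx P *m B *m P) = Qi *m ('X%:M - map_mx polyC B) *m Q.
  by rewrite mulmxBr mulmxBl mul_mx_scalar -scalemxAl QiQ scalemx1 !map_mxM.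
rewrite !det_mulmx mulrAC -det_mulmx QiQ.
by rewrite det1 mul1r.
Qed.

Lemma conj_toC (a : R) : (toC a)^* = toC a.
Proof. exact: conjc_real. Qed.


Lemma quad_diag k (y : 'cV[C]_k) (dd : 'rV[C]_k) :
  (map_mx Num.conj y^T *m diag_mx dd *m y) 0 0 = \sum_i dd 0 i * ((y i 0)^* * y i 0).
Proof.
rewrite mxE; apply: eq_bigr => i _; rewrite mul_mx_diag !mxE.
by rewrite -mulrA mulrCA.
Qed.

Lemma quad_id k (y : 'cV[C]_k) :
  (map_mx Num.conj y^T *m y) 0 0 = \sum_i ((y i 0)^* * y i 0).
Proof. by rewrite mxE; apply: eq_bigr => i _; rewrite !mxE. Qed.

Lemma normC_toC (z : C) : z^* * z = toC (complex.Re z ^+ 2 + complex.Im z ^+ 2).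
Proof. by rewrite add_Re2_Im2 sqr_normc mulrC. Qed.


Lemma sym_spectral k (A : 'M[R]_k) : A^T = A ->
  exists r : 'I_k -> R,
   char_poly A = \prod_(i < k) ('X - (r i)%:P) /\
   forall x : 'cV_k, exists nn : 'I_k -> R,
     [/\ forall i, 0 <= nn i, (x^T *m A *m x) 0 0 = \sum_i r i * nn i,
         (x^T *m x) 0 0 = \sum_i nn i &
         forall e : 'cV_k, A *m e = 0 -> (x^T *m e) 0 0 = 0 -> e != 0 ->
           forall i0, (forall i, i != i0 -> r i != 0) -> nn i0 = 0].
Proof.
move=> symA.
set AC := map_mx toC A.
have herm : AC \is hermsymmx.
  apply/is_hermitianmxP; rewrite expr0 scale1r.
  apply/matrixP => i j; rewrite !mxE conj_toC -[in LHS]symA mxE //.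
have /orthomx_spectralP eqA := hermitian_normalmx herm.
move: eqA; set P := spectralmx AC; set d := spectral_diag AC => eqA.
have Pu : P \is unitarymx := spectral_unitarymx AC.
have Punit : P \in unitmx := spectral_unit AC.
have dreal := hermitian_spectral_diag_real herm.
have dE : forall i, d 0 i = toC (complex.Re (d 0 i)).
  by move=> i; rewrite RRe_real //; apply: (mxOverP dreal).
have PtP : map_mx Num.conj P^T *m P = 1%:M by apply: mulmx1C; apply/unitarymxP.
exists (fun i => complex.Re (d 0 i)); split.
  apply: (map_poly_inj toC); rewrite map_char_poly -/AC eqA char_poly_conj //.
  rewrite char_poly_trig ?diag_mx_is_trig // rmorph_prod.
  apply: eq_bigr => i _; rewrite rmorphB /= map_polyX map_polyC /= -dE mxE eqxx mulr1n //.
move=> x; set xC := map_mx toC x; set y := P *m xC.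
exists (fun i => complex.Re (y i 0) ^+ 2 + complex.Im (y i 0) ^+ 2).
have xCt : xC^T *m map_mx Num.conj P^T = map_mx Num.conj y^T.
  rewrite /y trmx_mul map_mxM; congr (_ *m _).
  by apply/matrixP => i j; rewrite !mxE; apply/esym/conj_toC.
have key : forall B : 'M[R]_k, toC ((x^T *m B *m x) 0 0) = (xC^T *m map_mx toC B *m xC) 0 0.
  by move=> B; rewrite map_trmx -!map_mxM [RHS]mxE.
split.
- by move=> i; rewrite addr_ge0 // sqr_ge0.
- apply: complexI; rewrite key -/AC eqA invmx_unitary //.
  rewrite !mulmxA xCt -(mulmxA _ P xC) -/y quad_diag.
  rewrite rmorph_sum; apply: eq_bigr => i _; rewrite rmorphM /= -dE normC_toC //.
- apply: complexI; have := key 1%:M; rewrite mulmx1 => ->; rewrite map_mx1 mulmx1.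
  rewrite -[X in _ *m X]mul1mx -PtP !mulmxA xCt -mulmxA -/y quad_id rmorph_sum.
  by apply: eq_bigr => i _; rewrite normC_toC.
move=> e Ae0 xe0 e0 i0 hi0.
set eC := map_mx toC e; set f := P *m eC.
have Df : diag_mx d *m f = 0.
  have : AC *m eC = 0 by rewrite -map_mxM Ae0 map_mx0.
  rewrite eqA invmx_unitary // -!mulmxA => /(congr1 (mulmx P)).
  by rewrite mulmx0 !mulmxA (unitarymxP Pu) mul1mx -mulmxA.
have f0 : forall i, i != i0 -> f i 0 = 0.
  move=> i /hi0 ri; have /matrixP /(_ i 0) := Df; rewrite mul_diag_mx !mxE => /eqP.
  rewrite mulf_eq0 => /orP [|/eqP //]; rewrite dE => /eqP /complexI ri0.
  by move: ri; rewrite ri0 eqxx.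
have fi0 : f i0 0 != 0.
  apply: contra e0 => /eqP fz.
  have fz0 : f = 0.
    apply/matrixP => i j; rewrite [j]ord1 [RHS]mxE.
    by case: (eqVneq i i0) => [->|/f0].
  have : eC = 0 by rewrite -[eC]mul1mx -PtP -mulmxA -/f fz0 mulmx0.
  by move/eqP; rewrite map_mx_eq0.
have : (map_mx Num.conj y^T *m f) 0 0 = 0.
  rewrite -xCt -mulmxA [map_mx _ _ *m f]mulmxA PtP mul1mx.
  by rewrite map_trmx -map_mxM mxE xe0 rmorph0.
rewrite mxE (bigD1 i0) //= big1 ?addr0; last first.
  by move=> i /f0 ->; rewrite mulr0.
move/eqP; rewrite mulf_eq0 (negPf fi0) orbF !mxE conjC_eq0 => /eqP ->.
by rewrite /= expr0n /= addr0.
Qed.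


Definition qf k (A : 'M[R]_k) (x : 'cV[R]_k) := (x^T *m A *m x) 0 0.
Definition n2 k (x : 'cV[R]_k) := (x^T *m x) 0 0.

Lemma spectrumP k (A : 'M[R]_k) : (exists s, is_spectrum A s) -> is_spectrum A (spectrum A).
Proof. by rewrite /spectrum; case: pselect => // h _; case: (cid h). Qed.

Lemma sym_spec k (A : 'M[R]_k) : A^T = A ->
  exists r : 'I_k -> R,
   [/\ perm_eq (spectrum A) [seq r i | i <- enum 'I_k],
       is_spectrum A (spectrum A) &
   forall x : 'cV_k, exists nn : 'I_k -> R,
     [/\ forall i, 0 <= nn i, qf A x = \sum_i r i * nn i,
         n2 x = \sum_i nn i &
         forall e : 'cV_k, A *m e = 0 -> (x^T *m e) 0 0 = 0 -> e != 0 ->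
           forall i0, (forall i, i != i0 -> r i != 0) -> nn i0 = 0]].
Proof.
move=> /sym_spectral [r [cpA H]]; exists r.
have tot : total (fun x y : R => y <= x) by move=> x y; exact: le_total.
have prodE : \prod_(a <- [seq r i | i <- enum 'I_k]) ('X - a%:P) = char_poly A.
  by rewrite big_map big_enum cpA.
have sp : is_spectrum A (sort (fun x y : R => y <= x) [seq r i | i <- enum 'I_k]).
  split; first exact: sort_sorted.
  by rewrite -prodE; apply: perm_big; rewrite perm_sym perm_sort.
have [so cpS] := spectrumP (ex_intro _ _ sp).
split => //; apply: prod_XsubC_eq; rewrite -cpS prodE //.
Qed.


Lemma n2_ge0 k (x : 'cV[R]_k) : 0 <= n2 x.
Proof. by rewrite /n2 mxE sumr_ge0 // => i _; rewrite mxE -expr2 sqr_ge0. Qed.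

Section SymFacts.
Variables (k : nat) (A : 'M[R]_k).
Hypothesis symA : A^T = A.

Let s := spectrum A.

Lemma spec_size : size s = k.
Proof.
have [r [ps _ _]] := sym_spec symA.
by rewrite (perm_size ps) size_map size_enum_ord.
Qed.

Lemma spec_sorted : sorted (fun x y : R => y <= x) s.
Proof. by have [r [_ [? _] _]] := sym_spec symA. Qed.

Lemma spec_nth_le i j : (i <= j < k)%N -> nth 0 s j <= nth 0 s i.
Proof.
move=> /andP [ij jk].
have tr : transitive (fun x y : R => y <= x) by move=> x y z /= h1 h2; apply: le_trans h2 h1.
have rf : reflexive (fun x y : R => y <= x) by move=> x /=.
apply: (sorted_leq_nth tr rf 0 spec_sorted) => //; rewrite inE spec_size //.
exact: leq_ltn_trans jk.
Qed.

Lemma spec_mem_le a : a \in s -> (0 < k)%N -> lambda_min A <= a /\ a <= lambda_max A.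
Proof.
move=> aS k0; rewrite /lambda_min /lambda_max /eig -/s -(nth_index 0 aS).
have ilt : (index a s < k)%N by rewrite -spec_size index_mem.
split; apply: spec_nth_le; apply/andP; split; try lia.
  by rewrite -ltnS prednK.
exact: ilt.
Qed.

Lemma lmin_mem : (0 < k)%N -> lambda_min A \in s.
Proof. by move=> k0; apply: mem_nth; rewrite spec_size prednK. Qed.

Lemma rayleigh_min x : (0 < k)%N -> lambda_min A * n2 x <= qf A x.
Proof.
move=> k0; have [r [ps _ H]] := sym_spec symA; have [nn [nn0 -> -> _]] := H x.
rewrite mulr_sumr; apply: ler_sum => i _; apply: ler_wpM2r => //.
have : r i \in s by rewrite (perm_mem ps) map_f // mem_enum.
by move=> /spec_mem_le [] // ? _.
Qed.

Lemma rayleigh_max x : (0 < k)%N -> qf A x <= lambda_max A * n2 x.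
Proof.
move=> k0; have [r [ps _ H]] := sym_spec symA; have [nn [nn0 -> -> _]] := H x.
rewrite mulr_sumr; apply: ler_sum => i _; apply: ler_wpM2r => //.
have : r i \in s by rewrite (perm_mem ps) map_f // mem_enum.
by move=> /spec_mem_le [] // _ ?.
Qed.

Lemma lmin_ge c : (0 < k)%N -> (forall x, c * n2 x <= qf A x) -> c <= lambda_min A.
Proof.
move=> k0 H.
have [r [ps [_ cp] _]] := sym_spec symA.
have : root (char_poly A) (lambda_min A).
  by rewrite cp root_prod_XsubC lmin_mem.
rewrite -eigenvalue_root_char => /eigenvalueP [v vA v0].
have := H v^T; rewrite /qf /n2 trmxK vA -scalemxAl [X in _ <= X]mxE.
have pos : 0 < (v *m v^T) 0 0.
  rewrite lt_def; apply/andP; split; last first.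
    by have := n2_ge0 v^T; rewrite /n2 trmxK.
  rewrite mxE; apply: contra v0.
  rewrite psumr_eq0; last by move=> i _; rewrite !mxE -expr2 sqr_ge0.
  move=> /allP h; apply/eqP/matrixP => a j; rewrite [a]ord1 [RHS]mxE.
  move: (h j (mem_index_enum j)); rewrite !mxE -expr2 sqrf_eq0.
  by move/eqP.
by rewrite ler_pM2r.
Qed.

Lemma rayleigh_second b (e x : 'cV[R]_k) : (1 < k)%N -> 0 < b -> b <= nth 0 s (k.-2) ->
  A *m e = 0 -> e != 0 -> (x^T *m e) 0 0 = 0 -> b * n2 x <= qf A x.
Proof.
move=> k1 b0 Hb Ae e0 xe.
have h1 : k.-1 = (k - 1)%N by rewrite subn1.
have h2 : k.-2 = (k - 2)%N by rewrite -subn1 -subn1 -subnDA.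
have [r [ps [srt cp] H]] := sym_spec symA; have [nn [nn0 qE nE He]] := H x.
have cnt : (count (fun a : R => (a < b)%R) s <= 1)%N.
  rewrite -(cat_take_drop k.-1 s) count_cat.
  have -> : count (fun a : R => (a < b)%R) (take k.-1 s) = 0%N.
    apply/eqP; rewrite -leqn0 leqNgt -has_count; apply/hasPn => a aT.
    rewrite -leNgt.
    have sz : size (take k.-1 s) = k.-1 by rewrite size_take spec_size ifT // h1; lia.
    have ia : (index a (take k.-1 s) < k.-1)%N by rewrite -[X in (_ < X)%N]sz index_mem.
    rewrite -(nth_index 0 aT) nth_take //; apply: le_trans Hb (spec_nth_le _).
    rewrite h1 -?subn1 in ia *; apply/andP; split; last by lia.
    rewrite -ltnS; apply: (leq_trans ia); lia.
  rewrite add0n; apply: leq_trans (count_size _ _) _; rewrite size_drop spec_size h1; lia.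
have uniq_low : forall i j, r i < b -> r j < b -> i = j.
  move=> i j ri rj; apply/eqP; apply/negPn/negP => ij.
  have : (2 <= count (fun a : R => (a < b)%R) s)%N.
    rewrite (permP ps) count_map -size_filter.
    have -> : 2%N = size [:: i; j] by [].
    apply: uniq_leq_size; first by rewrite /= inE ij.
    move=> a; rewrite !inE mem_filter mem_enum andbT => /orP [] /eqP -> //=.
  lia.
case: (pselect (exists i0, r i0 < b)) => [[i0 ri0]|none].
  have nz : forall i, i != i0 -> r i != 0.
    move=> i ne; rewrite gt_eqF // (lt_le_trans b0) // leNgt; apply/negP => ri.
    by move: ne; rewrite (uniq_low _ _ ri ri0) eqxx.
  have nn_i0 := He e Ae xe e0 i0 nz.
  rewrite qE nE mulr_sumr; apply: ler_sum => i _.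
  case: (eqVneq i i0) => [->|ne]; first by rewrite nn_i0 !mulr0.
  apply: ler_wpM2r => //; rewrite leNgt; apply/negP => ri.
  by move: ne; rewrite (uniq_low _ _ ri ri0) eqxx.
rewrite qE nE mulr_sumr; apply: ler_sum => i _.
apply: ler_wpM2r => //; rewrite leNgt; apply/negP => ri.
by apply: none; exists i.
Qed.

End SymFacts.

End Spec.


Section Block.
Variable R : realType.

Definition ip k (x y : 'cV[R]_k) := (x^T *m y) 0 0.


Lemma n2_ip k (x : 'cV[R]_k) : n2 x = ip x x.
Proof. by []. Qed.

Lemma ipDr k (x y z : 'cV[R]_k) : ip x (y + z) = ip x y + ip x z.
Proof. by rewrite /ip mulmxDr mxE. Qed.

Lemma ipDl k (x y z : 'cV[R]_k) : ip (x + y) z = ip x z + ip y z.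
Proof. by rewrite /ip linearD /= mulmxDl mxE. Qed.

Lemma ipZl k a (x y : 'cV[R]_k) : ip (a *: x) y = a * ip x y.
Proof. by rewrite /ip linearZ /= -scalemxAl mxE. Qed.

Lemma ipZr k a (x y : 'cV[R]_k) : ip x (a *: y) = a * ip x y.
Proof. by rewrite /ip -scalemxAr mxE. Qed.

Lemma ip_sumr k I (r : seq I) (F : I -> 'cV[R]_k) x :
  ip x (\sum_(i <- r) F i) = \sum_(i <- r) ip x (F i).
Proof. by rewrite /ip mulmx_sumr summxE. Qed.

Lemma ip_sum k (x y : 'cV[R]_k) : ip x y = \sum_i x i 0 * y i 0.
Proof. by rewrite /ip mxE; apply: eq_bigr => i _; rewrite mxE. Qed.

Lemma ipC k (x y : 'cV[R]_k) : ip x y = ip y x.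
Proof. by rewrite !ip_sum; apply: eq_bigr => i _; rewrite mulrC. Qed.

Lemma n2D k (x y : 'cV[R]_k) : n2 (x + y) = n2 x + 2 * ip x y + n2 y.
Proof. rewrite !n2_ip ipDl !ipDr [ip y x]ipC; ring. Qed.

Lemma n2_sum k (x : 'cV[R]_k) : n2 x = \sum_i x i 0 ^+ 2.
Proof. by rewrite n2_ip ip_sum; apply: eq_bigr => i _; rewrite expr2. Qed.

Lemma cauchy_schwarz k (x y : 'cV[R]_k) : ip x y ^+ 2 <= n2 x * n2 y.
Proof.
have H : forall s t : R, 0 <= s ^+ 2 * n2 x - 2 * s * t * ip x y + t ^+ 2 * n2 y.
  move=> s t; have := n2_ge0 (s *: x - t *: y).
  rewrite n2D !n2_ip !ipZl !ipZr -!scaleNr !ipZl !ipZr ipC.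
  by move=> h; apply: le_trans h _; rewrite le_eqVlt; apply/orP; left; apply/eqP; ring.
have hx := n2_ge0 x; have hy := n2_ge0 y.
have h1 := H (ip x y) (n2 x); have h2 := H (n2 y) (ip x y); have h3 := H 1 (ip x y).
set X := n2 x in hx h1 h2 h3 *; set Y := n2 y in hy h1 h2 h3 *; set P := ip x y in h1 h2 h3 *.
case: (ltrgt0P X) => [X0|X0|X0]; first by nra.
- by move: hx; rewrite leNgt X0.
case: (ltrgt0P Y) => [Y0|Y0|Y0]; first by nra.
- by move: hy; rewrite leNgt Y0.
rewrite X0 Y0 in h3 *; nra.
Qed.


Lemma ip_mxcol p (p_ : 'I_p -> nat) (u w : forall i, 'cV[R]_(p_ i)) :
  ip (\mxcol_i u i) (\mxcol_i w i) = \sum_i ip (u i) (w i).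
Proof. by rewrite /ip tr_mxcol mul_mxrow_mxcol summxE. Qed.

Lemma n2_mxcol p (p_ : 'I_p -> nat) (w : forall i, 'cV[R]_(p_ i)) :
  n2 (\mxcol_i w i) = \sum_i n2 (w i).
Proof. exact: ip_mxcol. Qed.

Lemma qf_gram k l (X : 'M[R]_(l, k)) v : qf (X^T *m X) v = n2 (X *m v).
Proof. by rewrite /qf /n2 trmx_mul !mulmxA. Qed.

Lemma qf_total k l1 l2 (X : 'M[R]_(l1, k)) (Y : 'M[R]_(l2, k)) mu v :
  qf (mu *: (X^T *m X) + Y^T *m Y) v = mu * n2 (X *m v) + n2 (Y *m v).
Proof.
rewrite /qf mulmxDr mulmxDl -scalemxAr -scalemxAl mxE [in LHS]mxE.
by rewrite -!/(qf _ v) !qf_gram.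
Qed.

Lemma qf_sum_gram k I (r : seq I) (l : I -> nat) (X : forall t, 'M[R]_(l t, k)) z :
  qf (\sum_(t <- r) (X t)^T *m X t) z = \sum_(t <- r) n2 (X t *m z).
Proof.
rewrite /qf mulmx_sumr mulmx_suml summxE; apply: eq_bigr => t _.
by rewrite -qf_gram.
Qed.

Lemma gram_sym k l (X : 'M[R]_(l, k)) : (X^T *m X)^T = X^T *m X.
Proof. by rewrite trmx_mul trmxK. Qed.

Lemma total_sym k l1 l2 (X : 'M[R]_(l1, k)) (Y : 'M[R]_(l2, k)) mu :
  (mu *: (X^T *m X) + Y^T *m Y)^T = mu *: (X^T *m X) + Y^T *m Y.
Proof. by rewrite linearD /= linearZ /= !gram_sym. Qed.

Lemma sum_gram_sym k I (r : seq I) (l : I -> nat) (X : forall t, 'M[R]_(l t, k)) :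
  (\sum_(t <- r) (X t)^T *m X t)^T = \sum_(t <- r) (X t)^T *m X t.
Proof. by rewrite linear_sum /=; apply: eq_bigr => t _; rewrite gram_sym. Qed.

Lemma kron_mxcol p q n (D : 'M[R]_(p, q)) (v : forall j : 'I_q, 'cV[R]_n) :
  kron D (1%:M : 'M[R]_n) *m \mxcol_j v j = \mxcol_i \sum_j D i j *: v j.
Proof.
rewrite /kron mul_mxblock_mxrow; apply: eq_mxcol => i; apply: eq_bigr => j _.
by rewrite -scalemxAl mul1mx.
Qed.

Lemma blockdiag_mxcol T n (m : 'I_T -> nat) (Cs : forall t, 'M[R]_(m t, n)) (v : forall j : 'I_T, 'cV[R]_n) :
  blockdiag Cs *m \mxcol_j v j = \mxcol_i (Cs i *m v i).
Proof.
rewrite /blockdiag mul_mxblock_mxrow; apply: eq_mxcol => i.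
rewrite (bigD1 i) //= eqxx big1 ?addr0 // => j /negPf; rewrite eq_sym => ->.
by rewrite mul0mx.
Qed.

End Block.


Section Sc.
Variable R : realType.

Lemma quad_psd (al be ga a c : R) : 0 < al -> 0 <= 4 * al * ga - be ^+ 2 ->
  0 <= al * a ^+ 2 - be * a * c + ga * c ^+ 2.
Proof.
move=> al0 h.
have e : 4 * al * (al * a ^+ 2 - be * a * c + ga * c ^+ 2) =
   (2 * al * a - be * c) ^+ 2 + (4 * al * ga - be ^+ 2) * c ^+ 2 by ring.
have : 0 <= 4 * al * (al * a ^+ 2 - be * a * c + ga * c ^+ 2).
  by rewrite e addr_ge0 ?sqr_ge0 // mulr_ge0 ?sqr_ge0.
by rewrite pmulr_rge0 // mulr_gt0.
Qed.

Lemma scalar_main (b1 b2 b3 mu A2 C2 Lf pp P rr : R) :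
  0 < b1 -> 0 < b2 -> 0 < b3 -> 0 < mu -> 0 <= A2 -> 0 <= C2 ->
  b1 * C2 <= Lf -> b2 * A2 <= pp -> 0 <= rr ->
  P ^+ 2 <= b3 ^+ 2 / 4 * (A2 * C2) -> 0 <= pp + 2 * P + rr ->
  lambda_bar' b1 b2 b3 mu * (A2 + C2) <= mu * Lf + (pp + 2 * P + rr).
Proof.
move=> b10 b20 b30 mu0 A20 C20 hL hp hr hP hS.
have [a a0 eA] : exists2 a : R, 0 <= a & A2 = a ^+ 2.
  by exists (Num.sqrt A2); rewrite ?sqrtr_ge0 ?sqr_sqrtr.
have [c c0 eC] : exists2 c : R, 0 <= c & C2 = c ^+ 2.
  by exists (Num.sqrt C2); rewrite ?sqrtr_ge0 ?sqr_sqrtr.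
subst A2 C2.
set y := mu * b1.
have hmu : y * c ^+ 2 <= mu * Lf.
  by rewrite /y -mulrA ler_pM2l.
have hP' : - (b3 / 2 * (a * c)) <= P.
  have ac0 : 0 <= a * c by apply: mulr_ge0.
  have m0 : 0 <= b3 / 2 * (a * c) by nra.
  have hP2 : P ^+ 2 <= (b3 / 2 * (a * c)) ^+ 2.
    by apply: le_trans hP _; rewrite le_eqVlt; apply/orP; left; apply/eqP; field.
  move: m0 hP2; set m := b3 / 2 * (a * c) => m0 hP2; nra.
set S := pp + 2 * P + rr.
have hS' : b2 * a ^+ 2 - b3 * a * c <= S.
  rewrite /S; have : - (b3 * a * c) <= 2 * P.
    by move: hP'; rewrite -(ler_pM2l (_ : 0 < 2)) // => h; apply: le_trans _ h; rewrite le_eqVlt; apply/orP; left; apply/eqP; field.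
  move=> h2; lra.
rewrite /lambda_bar' -/y; case: ifP => hy.
- set D := b2 ^+ 2 + b3 ^+ 2.
  have D0 : 0 < D by rewrite addr_gt0 // exprn_gt0.
  set la := y * b2 / D.
  have la0 : 0 <= la by rewrite /la !mulr_ge0 ?invr_ge0 ?ltW // /y mulr_gt0.
  have la1 : la <= 1.
    have : y * b2 < D / 2.
      move: hy; rewrite /D => hy.
      have : y < (b2 ^+ 2 + b3 ^+ 2) / (2 * b2).
        by apply: lt_le_trans hy _; rewrite le_eqVlt; apply/orP; left; apply/eqP; field; rewrite gt_eqF.
      rewrite ltr_pdivlMr ?mulr_gt0 // => h; apply: (@lt_le_trans _ _ ((b2 ^+ 2 + b3 ^+ 2) / 2)).
        by rewrite ltr_pdivlMr //; lra.
      by [].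
    by rewrite /la ler_pdivrMr // mul1r => h; lra.
  have hSl : la * (b2 * a ^+ 2 - b3 * a * c) <= S.
    have : la * (b2 * a ^+ 2 - b3 * a * c) <= la * S by rewrite ler_wpM2l.
    move=> h; apply: le_trans h _; rewrite -subr_ge0 -{1}(mul1r S) -mulrBl mulr_ge0 //; lra.
  have kE : b2 ^+ 2 / (2 * (b2 ^+ 2 + b3 ^+ 2)) * y = la * b2 / 2.
    by rewrite /la /D; field; rewrite -/D gt_eqF.
  rewrite kE; apply: le_trans (lerD hmu hSl); rewrite -subr_ge0.
  have -> : y * c ^+ 2 + la * (b2 * a ^+ 2 - b3 * a * c) - la * b2 / 2 * (a ^+ 2 + c ^+ 2)
     = (la * b2 / 2) * a ^+ 2 - (la * b3) * a * c + (y - la * b2 / 2) * c ^+ 2  by field.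
  have lap : 0 < la by apply: divr_gt0 => //; apply: mulr_gt0 => //; apply: mulr_gt0.
  apply: quad_psd; first by apply: divr_gt0 => //; apply: mulr_gt0.
  have -> : 4 * (la * b2 / 2) * (y - la * b2 / 2) - (la * b3) ^+ 2 = la * (2 * b2 * y - la * D) by rewrite /D; field.
  have -> : la * D = y * b2 by rewrite /la mulrAC -mulrA divff ?mulr1 // gt_eqF.
  have : 0 < y * b2 by apply: mulr_gt0 => //; apply: mulr_gt0.
  move=> h; apply: mulr_ge0; lra.
- set x := y - b2; set q := Num.sqrt (b3 ^+ 2 + x ^+ 2).
  have q2 : q ^+ 2 = b3 ^+ 2 + x ^+ 2 by rewrite sqr_sqrtr // addr_ge0 ?sqr_ge0.
  have q0 : 0 < q by rewrite sqrtr_gt0 ltr_pwDl ?sqr_ge0 // exprn_gt0.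
  have qx : x <= q /\ - x <= q.
    by split; nra.
  have -> : 4^-1 * (1 - x / q) * y + b2 / 4 + (b2 * x - b3 ^+ 2) / (4 * q) = (b2 + y - q) / 4.
    apply/eqP; rewrite -subr_eq0; apply/eqP.
    have -> : 4^-1 * (1 - x / q) * y + b2 / 4 + (b2 * x - b3 ^+ 2) / (4 * q) - (b2 + y - q) / 4
       = (q ^+ 2 - b3 ^+ 2 - x ^+ 2) / (4 * q) by rewrite /x; field; rewrite gt_eqF.
    by rewrite q2 (_ : b3 ^+ 2 + x ^+ 2 - b3 ^+ 2 - x ^+ 2 = 0) ?mul0r //; ring.
  set e := (b2 + y - q) / 2.
  have eE : (b2 + y - q) / 4 = e / 2 by rewrite /e -mulrA; congr (_ * _); field.
  rewrite eE.
  case: (lerP e 0) => he.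
    have s0 : 0 <= a ^+ 2 + c ^+ 2 by rewrite addr_ge0 ?sqr_ge0.
    apply: (@le_trans _ _ 0); first by nra.
    have h : 0 <= b1 * c ^+ 2 by apply: mulr_ge0; [lra | exact: sqr_ge0].
    have Lf0 : 0 <= Lf by lra.
    by apply: addr_ge0 => //; apply: mulr_ge0; lra.
  apply: (@le_trans _ _ (e * (a ^+ 2 + c ^+ 2))).
    rewrite ler_wpM2r ?addr_ge0 ?sqr_ge0 //; lra.
  apply: le_trans (lerD hmu hS'); rewrite -subr_ge0.
  have -> : y * c ^+ 2 + (b2 * a ^+ 2 - b3 * a * c) - e * (a ^+ 2 + c ^+ 2) =
    (b2 - e) * a ^+ 2 - b3 * a * c + (y - e) * c ^+ 2 by ring.
  have u0 : 0 < b2 - e.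
    rewrite /e; have : 0 <= q - x by lra.
    rewrite /x => h; rewrite lt_def; apply/andP; split; last by lra.
    apply/eqP => h'; have : b2 + y - q = 2 * b2 by lra.
    move=> h3; have : q = y - b2 by lra. move=> hq.
    by move: q2; rewrite hq /x => /eqP; rewrite eq_sym -subr_eq0 addrK sqrf_eq0 gt_eqF.
  apply: quad_psd => //.
  have -> : 4 * (b2 - e) * (y - e) - b3 ^+ 2 = (q ^+ 2 - x ^+ 2 - b3 ^+ 2) by rewrite /e /x; field.
  by rewrite q2 (_ : b3 ^+ 2 + x ^+ 2 - x ^+ 2 - b3 ^+ 2 = 0) //; ring.
Qed.


Lemma part2 (b1 b2 b3 mu : R) : 0 < b1 -> 0 < b2 -> 0 < b3 -> 0 < mu ->
  b2 + b3 ^+ 2 / b2 <= mu * b1 -> b2 / 4 <= lambda_bar' b1 b2 b3 mu.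
Proof.
move=> b10 b20 b30 mu0 hy; rewrite /lambda_bar'.
set y := mu * b1 in hy *.
have yb : b2 ^+ 2 + b3 ^+ 2 <= y * b2.
  have : (b2 + b3 ^+ 2 / b2) * b2 <= y * b2 by rewrite ler_pM2r.
  by apply: le_trans; rewrite mulrDl -mulrA mulVf ?gt_eqF // mulr1 expr2.
have -> : (y < b2 + (b3 ^+ 2 - b2 ^+ 2) / (2 * b2)) = false.
  apply/negbTE; rewrite -leNgt.
  rewrite -(ler_pM2r (_ : 0 < 2 * b2)); last by rewrite mulr_gt0.
  rewrite mulrDl -mulrA mulVf ?mulr1; last by rewrite gt_eqF // mulr_gt0.
  have b3s : 0 < b3 ^+ 2 by rewrite exprn_gt0.
  nra.
set x := y - b2; set q := Num.sqrt (b3 ^+ 2 + x ^+ 2).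
have q2 : q ^+ 2 = b3 ^+ 2 + x ^+ 2 by rewrite sqr_sqrtr // addr_ge0 ?sqr_ge0.
have q0 : 0 < q by rewrite sqrtr_gt0 ltr_pwDl ?sqr_ge0 // exprn_gt0.
have -> : 4^-1 * (1 - x / q) * y + b2 / 4 + (b2 * x - b3 ^+ 2) / (4 * q) = (b2 + y - q) / 4.
  apply/eqP; rewrite -subr_eq0; apply/eqP.
  have -> : 4^-1 * (1 - x / q) * y + b2 / 4 + (b2 * x - b3 ^+ 2) / (4 * q) - (b2 + y - q) / 4
     = (q ^+ 2 - b3 ^+ 2 - x ^+ 2) / (4 * q) by rewrite /x; field; rewrite gt_eqF.
  by rewrite q2 (_ : b3 ^+ 2 + x ^+ 2 - b3 ^+ 2 - x ^+ 2 = 0) ?mul0r //; ring.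
have y0 : 0 < y by rewrite /y mulr_gt0.
have : q <= y.
  have : q ^+ 2 <= y ^+ 2 by rewrite q2 /x; nra.
  move=> h; nra.
move=> h; lra.
Qed.

End Sc.


Section MainS.
Variable R : realType.

Lemma lap_bound T n E (D : 'M[R]_(E, T)) (w : 'I_T -> 'cV[R]_n) b1 :
  (1 < T)%N -> 0 < b1 -> b1 <= nth 0 (spectrum (D^T *m D)) T.-2 ->
  (forall i, \sum_j D i j = 0) -> \sum_j w j = 0 ->
  b1 * \sum_j n2 (w j) <= \sum_i n2 (\sum_j D i j *: w j).
Proof.
move=> T1 b10 hb hrow hw.
have T0 : (0 < T)%N by lia.
pose om := fun l : 'I_n => \col_j (w j l 0) : 'cV[R]_T.
have Le : (D^T *m D) *m (const_mx 1 : 'cV[R]_T) = 0.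
  rewrite -mulmxA; have -> : D *m const_mx 1 = 0 :> 'cV[R]_E.
    apply/matrixP => i j; rewrite !mxE -[RHS](hrow i).
    by apply: eq_bigr => k _; rewrite mxE mulr1.
  by rewrite mulmx0.
have e0 : (const_mx 1 : 'cV[R]_T) != 0.
  apply/negP => /eqP /matrixP /(_ (Ordinal T0) 0); rewrite !mxE.
  by apply/eqP; exact: oner_neq0.
have hom : forall l, b1 * n2 (om l) <= qf (D^T *m D) (om l).
  move=> l; apply: (rayleigh_second (gram_sym D) T1 b10 hb Le e0).
  have hw' : (\sum_j w j) l 0 = 0 by rewrite hw mxE.
  rewrite mxE -[X in _ = X]hw' summxE.
  by apply: eq_bigr => j _; rewrite !mxE mulr1.
have lhs : \sum_j n2 (w j) = \sum_l n2 (om l).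
  under eq_bigr do rewrite n2_sum.
  rewrite exchange_big /=; apply: eq_bigr => l _; rewrite n2_sum.
  by apply: eq_bigr => j _; rewrite mxE.
have rhs : \sum_i n2 (\sum_j D i j *: w j) = \sum_l qf (D^T *m D) (om l).
  under eq_bigr do rewrite n2_sum.
  rewrite exchange_big /=; apply: eq_bigr => l _; rewrite qf_gram n2_sum.
  apply: eq_bigr => i _; congr (_ ^+ 2); rewrite summxE mxE.
  by apply: eq_bigr => j _; rewrite !mxE.
by rewrite lhs rhs mulr_sumr; apply: ler_sum => l _; apply: hom.
Qed.


Lemma sum_ind (T : nat) (a : 'I_T) : \sum_j ((j == a)%:R : R) = 1.
Proof. by rewrite (bigD1 a) //= eqxx big1 ?addr0 // => j /negPf ->. Qed.

Lemma lmin_gram_ge0 k l (X : 'M[R]_(l, k)) : (0 < k)%N -> 0 <= lambda_min (X^T *m X).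
Proof.
move=> k0; apply: (lmin_ge (gram_sym X) k0) => x.
by rewrite mul0r qf_gram n2_ge0.
Qed.

Lemma lmax_gram_ge0 k l (X : 'M[R]_(l, k)) : (0 < k)%N -> 0 <= lambda_max (X^T *m X).
Proof.
move=> k0; apply: le_trans (lmin_gram_ge0 X k0) _.
by have [] := spec_mem_le (gram_sym X) (lmin_mem (gram_sym X) k0) k0.
Qed.

Lemma lmax_sgram_ge0 k T (l : 'I_T -> nat) (X : forall t, 'M[R]_(l t, k)) : (0 < k)%N ->
  0 <= lambda_max (\sum_(t < T) (X t)^T *m X t).
Proof.
move=> k0; have sy := sum_gram_sym (index_enum 'I_T) X.
have : 0 <= lambda_min (\sum_(t < T) (X t)^T *m X t).
  apply: (lmin_ge sy k0) => x; rewrite mul0r qf_sum_gram sumr_ge0 // => t _.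
  exact: n2_ge0.
move=> h; apply: le_trans h _.
by have [] := spec_mem_le sy (lmin_mem sy k0) k0.
Qed.

End MainS.


Unset Implicit Arguments.

Theorem lemma1 (R : realType) (n T E : nat) (g : rel 'I_T)
  (D : 'M[R]_(E, T)) (m : 'I_T -> nat) (Cs : forall t : 'I_T, 'M[R]_(m t, n))
  (b1 b2 b3 mu : R) :
  (1 <= n)%N -> (2 <= T)%N ->
  symmetric g -> irreflexive g ->
  is_incidence g D ->
  0 < b1 -> 0 < b2 -> 0 < b3 -> 0 < mu ->
  let L := D^T *m D in
  let M := kron D (1%:M : 'M[R]_n) in
  let C := blockdiag Cs in
  let OTO := \sum_(t < T) ((Cs t)^T *m Cs t) in
  eig L T.-1 >= b1 ->
  lambda_min OTO / T%:R >= b2 ->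
  2 * spec_norm C * Num.sqrt (lambda_max OTO) / Num.sqrt T%:R <= b3 ->
  lambda_min (mu *: (M^T *m M) + C^T *m C) >= lambda_bar b1 b2 b3 mu (C^T *m C)
  /\ (mu * b1 >= b2 + b3 ^+ 2 / b2 -> lambda_bar' b1 b2 b3 mu >= b2 / 4).
Proof.
move=> hn hT _ _ [src [dst [_ [_ hD]]]] b10 b20 b30 mu0 L M C OTO hb1 hb2 hb3.
split; last exact: part2.
have T0 : (0 < T)%N by lia.
have N0 : (0 < \sum_(j < T) n)%N by rewrite sum_nat_const card_ord muln_gt0; lia.
have symTot := total_sym M C mu.
have symC := gram_sym C.
have symO : OTO^T = OTO := sum_gram_sym _ _.
have hrow : forall i, \sum_j D i j = 0.
  move=> i; under eq_bigr do rewrite hD.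
  by rewrite sumrB !sum_ind subrr.
set lO := lambda_max OTO; set lC := lambda_max (C^T *m C).
have lO0 : 0 <= lO by apply: lmax_sgram_ge0.
have lC0 : 0 <= lC by apply: lmax_gram_ge0.
have Tpos : 0 < T%:R :> R by rewrite ltr0n.
have hb3' : 4 * (lC * lO) <= b3 ^+ 2 * T%:R.
  move: hb3; rewrite /spec_norm -/lC -/lO ler_pdivrMr ?sqrtr_gt0 //.
  set sC := Num.sqrt lC; set sO := Num.sqrt lO; set sT := Num.sqrt T%:R => h.
  have sC0 : 0 <= sC := sqrtr_ge0 _.
  have sO0 : 0 <= sO := sqrtr_ge0 _.
  have sT0 : 0 <= sT := sqrtr_ge0 _.
  have h2 : (2 * sC * sO) ^+ 2 <= (b3 * sT) ^+ 2.
    have : 0 <= 2 * sC * sO by rewrite !mulr_ge0.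
    move=> h0; nra.
  move: h2; rewrite !exprMn !sqr_sqrtr ?ler0n //.
  by move=> h2; apply: le_trans h2; rewrite le_eqVlt; apply/orP; left; apply/eqP; ring.
have hb2' : b2 * T%:R <= lambda_min OTO by rewrite -ler_pdivlMr.
have key : forall v : 'cV[R]_(\sum_(j < T) n),
    lambda_bar' b1 b2 b3 mu * n2 v <= qf (mu *: (M^T *m M) + C^T *m C) v.
  move=> v.
  pose vs := fun j => (submxcol v j : 'cV[R]_n).
  pose z := T%:R^-1 *: \sum_j vs j.
  pose w := fun j => vs j - z.
  have wsum : \sum_j w j = 0.
    rewrite /w sumrB sumr_const card_ord /z -scaler_nat scalerA mulfV ?scale1r ?subrr //.
    by rewrite gt_eqF.
  pose u := \mxcol_(j < T) z; pose wv := \mxcol_j w j.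
  have vE : v = u + wv.
    by rewrite -[LHS]submxcolK /u /wv -mxcolD; apply: eq_mxcol => j; rewrite /w addrC subrK.
  have ipuw : ip u wv = 0 by rewrite ip_mxcol -ip_sumr wsum /ip mulmx0 mxE.
  have n2v : n2 v = n2 u + n2 wv by rewrite vE n2D ipuw mulr0 addr0.
  have n2u : n2 u = T%:R * n2 z by rewrite n2_mxcol sumr_const card_ord mulr_natl.
  have Mu : M *m u = 0.
    rewrite /M kron_mxcol -[RHS](mxcol0 _); apply: eq_mxcol => i.
    by rewrite -scaler_suml hrow scale0r.
  set Lf := n2 (M *m wv).
  have hLf : b1 * n2 wv <= Lf.
    rewrite /Lf /M kron_mxcol n2_mxcol /wv n2_mxcol.
    by apply: lap_bound => //; lia.
  set p := C *m u; set r := C *m wv.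
  have pE : n2 p = qf OTO z.
    by rewrite /p /C blockdiag_mxcol n2_mxcol qf_sum_gram.
  have hpl : b2 * n2 u <= n2 p.
    rewrite pE n2u; apply: le_trans (rayleigh_min symO z hn).
    by rewrite mulrA ler_wpM2r ?n2_ge0.
  have hpu : n2 p <= lO * n2 z by rewrite pE; apply: rayleigh_max.
  have hru : n2 r <= lC * n2 wv by rewrite /r -qf_gram; apply: rayleigh_max.
  have hP : ip p r ^+ 2 <= b3 ^+ 2 / 4 * (n2 u * n2 wv).
    apply: le_trans (cauchy_schwarz p r) _.
    have z0 := n2_ge0 z; have w0 := n2_ge0 wv; have p0 := n2_ge0 p; have r0 := n2_ge0 r.
    apply: (@le_trans _ _ ((lO * n2 z) * (lC * n2 wv))); first by apply: ler_pM.
    rewrite n2u.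
    have : (lO * n2 z) * (lC * n2 wv) = (lC * lO) * (n2 z * n2 wv) by ring.
    move=> ->.
    have : b3 ^+ 2 / 4 * (T%:R * n2 z * n2 wv) = (b3 ^+ 2 * T%:R / 4) * (n2 z * n2 wv) by field.
    move=> ->; apply: ler_wpM2r; first by apply: mulr_ge0.
    by rewrite ler_pdivlMr //; lra.
  rewrite n2v qf_total vE mulmxDr Mu add0r -/Lf mulmxDr -/p -/r n2D.
  apply: scalar_main => //; rewrite ?n2_ge0 //.
  by rewrite -n2D n2_ge0.
have k1 := lmin_ge symTot N0 key.
have k2 : lambda_min (C^T *m C) <= lambda_min (mu *: (M^T *m M) + C^T *m C).
  apply: (lmin_ge symTot N0) => v; rewrite qf_total.
  apply: le_trans (rayleigh_min symC v N0) _; rewrite qf_gram lerDr.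
  by rewrite mulr_ge0 ?n2_ge0 // ltW.
by rewrite /lambda_bar ge_max k1 k2.
Qed.
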